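(* Let $G_0=(V_0,w_0)$ and $G_1=(V_1,w_1)$ be weighted graphs with disjoint vertex sets, let $v_0\in V_0$, $v_1\in V_1$, and let $G=G_0^{v_0}\oplus G_1^{v_1}$ be their direct union. Let $c_b$ be the minimum cut weight of $G_b$ for $b\in\{0,1\}$. If $c_0=c_1$ then $\mathrm{cdim}(G)=\mathrm{cdim}(G_0)+\mathrm{cdim}(G_1)$, and if $c_b<c_{1-b}$ then $\mathrm{cdim}(G)=\mathrm{cdim}(G_b)$.
   Context: A weighted graph $G=(V,w)$ assigns a nonnegative weight to each unordered pair of distinct vertices; $E=\{e:w(e)>0\}$. For $\emptyset\ne X\subsetneq V$, $\Delta(X)$ is the set of edges with exactly one endpoint in $X$; $\mathcal{M}(G)$ is the set of minimum-weight cuts; $\chi(S)$ is the characteristic vector of $S$ indexed by $E$; $\mathrm{cdim}(G)=\dim\,\mathrm{span}\{\chi(S):S\in\mathcal{M}(G)\}$. The direct union $G_0^{v_0}\oplus G_1^{v_1}=(V,w)$ identifies $v_0$ and $v_1$ into a new vertex $v$: $V=(V_0\cup V_1\cup\{v\})\setminus\{v_0,v_1\}$, and $w(\{x,y\})=w_b(\{x,y\})$ if $x,y\in V_b\setminus\{v_b\}$, $w(\{x,v\})=w_b(\{x,v_b\})$ if $x\in V_b\setminus\{v_b\}$ (for $b\in\{0,1\}$), and $w(\{x,y\})=0$ otherwise. *)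

(* Defs.v *)
From HB Require Import structures.
From mathcomp Require Import all_boot all_order all_algebra.
Set Implicit Arguments. Unset Strict Implicit. Unset Printing Implicit Defensive.
Import Order.TTheory GRing.Theory Num.Theory.
Local Open Scope ring_scope.

(* A weighted graph on a finite vertex type V is given by a weight function
   w : {set V} -> R, of which only the values on 2-element sets (unordered
   pairs of distinct vertices) are meaningful. *)

Section Graphs.
Variables (R : realFieldType) (V : finType).

Definition nonneg_weights (w : {set V} -> R) : Prop :=
  forall e : {set V}, #|e| = 2%N -> 0 <= w e.

Definition edges (w : {set V} -> R) : {set {set V}} :=
  [set e : {set V} | (#|e| == 2%N) && (0 < w e)].

Definition Delta (w : {set V} -> R) (X : {set V}) : {set {set V}} :=
  [set e in edges w | #|e :&: X| == 1%N].

Definition cut_weight (w : {set V} -> R) (X : {set V}) : R :=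
  \sum_(e in Delta w X) w e.

Definition proper_nonempty (X : {set V}) : bool := (X != set0) && (X != setT).

Definition is_min_cut_weight (w : {set V} -> R) (c : R) : Prop :=
  (exists X, proper_nonempty X /\ cut_weight w X = c) /\
  (forall X, proper_nonempty X -> c <= cut_weight w X).

Definition min_cuts (w : {set V} -> R) : {set {set {set V}}} :=
  [set S | [exists X, [&& proper_nonempty X, S == Delta w X &
      [forall Y, proper_nonempty Y ==> (cut_weight w X <= cut_weight w Y)]]]].

Definition cut_matrix (w : {set V} -> R) : 'M[R]_(#|min_cuts w|, #|edges w|) :=
  \matrix_(i < #|min_cuts w|, j < #|edges w|)
     (if enum_val j \in enum_val i then 1 else 0).

Definition cdim (w : {set V} -> R) : nat := \rank (cut_matrix w).

End Graphs.

(* Direct union G_0^{v_0} (+) G_1^{v_1}: vertex set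
   (V_0 \ {v_0}) u (V_1 \ {v_1}) u {v}, with v represented by None. *)
Section DirectUnion.
Variables (R : realFieldType) (V0 V1 : finType) (v0 : V0) (v1 : V1).

Definition DU : finType :=
  option ({x : V0 | x != v0} + {x : V1 | x != v1})%type.

Definition to0 (x : DU) : option V0 :=
  match x with
  | None => Some v0
  | Some (inl y) => Some (val y)
  | Some (inr _) => None
  end.

Definition to1 (x : DU) : option V1 :=
  match x with
  | None => Some v1
  | Some (inl _) => None
  | Some (inr y) => Some (val y)
  end.

Definition dunion (w0 : {set V0} -> R) (w1 : {set V1} -> R) : {set DU} -> R :=
  fun e =>
    if e \subset [pred x | to0 x] then w0 [set odflt v0 (to0 x) | x in e]
    else if e \subset [pred x | to1 x] then w1 [set odflt v1 (to1 x) | x in e]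
    else 0.

End DirectUnion.

(* Main.v *)
Require Import Defs.
From HB Require Import structures.
From mathcomp Require Import all_boot all_order all_algebra.
From mathcomp Require Import lra.
Set Implicit Arguments. Unset Strict Implicit. Unset Printing Implicit Defensive.
Import Order.TTheory GRing.Theory Num.Theory.
Local Open Scope ring_scope.


Section Lin.
Variable F : fieldType.

Definition vec (T : finType) (S : {set T}) : 'rV[F]_#|T| :=
  \row_j ((enum_val j \in S)%:R).

Definition matT (T : finType) (Fm : {set {set T}}) : 'M[F]_(#|Fm|, #|T|) :=
  \matrix_(i < #|Fm|) vec (enum_val i).

Lemma sumT (T : finType) (G : T -> F) :
  \sum_(j < #|T|) G (enum_val j) = \sum_(x : T) G x.
Proof. by rewrite (big_enum_val (A := T)). Qed.

Lemma sum_ind (T : finType) (S : {set T}) (y : T) :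
  \sum_(x : T) ((x \in S)%:R * (x == y)%:R : F) = (y \in S)%:R.
Proof.
rewrite (bigD1 y) //= eqxx mulr1 big1 ?addr0 // => x /negPf ->; by rewrite mulr0.
Qed.

Lemma sum_img (T T' : finType) (g : T -> T') (S : {set T}) (y : T') :
  injective g ->
  \sum_(x : T) ((x \in S)%:R * (g x == y)%:R : F) = (y \in g @: S)%:R.
Proof.
move=> ig; case: (boolP (y \in g @: S)) => [/imsetP [x0 Hx0 ->]|Hy].
  rewrite (bigD1 x0) //= Hx0 eqxx mulr1 big1 ?addr0 // => x /negPf Hx.
  by rewrite (inj_eq ig) Hx mulr0.
rewrite big1 // => x _; case: (boolP (x \in S)) => Hx; last by rewrite mul0r.
case: (eqVneq (g x) y) => [Hxy|]; last by rewrite mulr0.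
by move: Hy; rewrite -Hxy imset_f.
Qed.

Lemma sum_pre (T T' : finType) (g : T -> T') (S : {set T'}) (x : T) :
  \sum_(y : T') ((y \in S)%:R * (g x == y)%:R : F) = (g x \in S)%:R.
Proof.
rewrite (bigD1 (g x)) //= eqxx mulr1 big1 ?addr0 // => y Hy.
by rewrite eq_sym (negPf Hy) mulr0.
Qed.

Definition Mg (T T' : finType) (g : T -> T') : 'M[F]_(#|T|, #|T'|) :=
  \matrix_(t, t') ((g (enum_val t) == enum_val t')%:R).

Lemma vecMg (T T' : finType) (g : T -> T') (S : {set T}) : injective g ->
  vec S *m Mg g = vec (g @: S).
Proof.
move=> ig; apply/rowP => j; rewrite !mxE.
under eq_bigr do rewrite !mxE.
by rewrite (sumT (fun x => (x \in S)%:R * (g x == enum_val j)%:R)) sum_img.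
Qed.

Lemma vecMgT (T T' : finType) (g : T -> T') (S : {set T'}) :
  vec S *m (Mg g)^T = vec (g @^-1: S).
Proof.
apply/rowP => j; rewrite !mxE.
under eq_bigr do rewrite !mxE.
by rewrite (sumT (fun y => (y \in S)%:R * (g (enum_val j) == y)%:R)) sum_pre inE.
Qed.

Lemma rowT (T : finType) (Fm : {set {set T}}) (i : 'I_#|Fm|) :
  row i (matT Fm) = vec (enum_val i).
Proof. by rewrite rowK. Qed.

Lemma vec_sub (T : finType) (Fm : {set {set T}}) S :
  S \in Fm -> (vec S <= matT Fm)%MS.
Proof.
move=> HS; have := row_sub (enum_rank_in HS S) (matT Fm).
by rewrite rowT enum_rankK_in.
Qed.

Lemma matT_sub (T : finType) (Fm : {set {set T}}) m (A : 'M[F]_(m, #|T|)) :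
  (forall S, S \in Fm -> (vec S <= A)%MS) -> (matT Fm <= A)%MS.
Proof.
move=> H; apply/row_subP => i; rewrite rowT; apply: H; exact: enum_valP.
Qed.

Lemma rank_relabel (T T' : finType) (g : T -> T') (Fm : {set {set T}}) :
  injective g ->
  \rank (matT [set [set g x | x in S] | S : {set T} in Fm]) = \rank (matT Fm).
Proof.
move=> ig.
have E1 : (matT [set [set g x | x in S] | S : {set T} in Fm] == matT Fm *m Mg g)%MS.
  apply/andP; split.
    apply: matT_sub => S' /imsetP [S HS ->].
    rewrite -vecMg //; apply: submxMr; exact: vec_sub.
  apply/row_subP => i; rewrite row_mul rowT vecMg //.
  apply: vec_sub; apply: imset_f; exact: enum_valP.
rewrite (eqmx_rank E1); apply/eqP; rewrite eqn_leq mxrankM_maxl /=.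
have E2 : matT Fm = matT Fm *m Mg g *m (Mg g)^T.
  apply/row_matrixP => i; rewrite !row_mul rowT vecMg // vecMgT.
  by congr vec; apply/setP => x; rewrite inE mem_imset.
rewrite {1}E2; exact: mxrankM_maxl.
Qed.

Lemma vec0 (T : finType) : vec (set0 : {set T}) = 0.
Proof. by apply/rowP => j; rewrite !mxE inE. Qed.

Lemma vec_diag (T : finType) (S A : {set T}) :
  vec S *m diag_mx (vec A) = vec (S :&: A).
Proof. by rewrite mul_mx_diag; apply/rowP => j; rewrite !mxE inE; by case: (_ \in S); case: (_ \in A); rewrite ?mulr0 ?mulr1. Qed.

Lemma matT_diag (T : finType) (Fm : {set {set T}}) (A : {set T}) :
  (forall S, S \in Fm -> S \subset A) -> matT Fm *m diag_mx (vec A) = matT Fm.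
Proof.
move=> H; apply/row_matrixP => i; rewrite row_mul rowT vec_diag.
by move/setIidPl: (H _ (enum_valP i)) => ->.
Qed.

Lemma matT_diag0 (T : finType) (Fm : {set {set T}}) (A : {set T}) :
  (forall S, S \in Fm -> [disjoint S & A]) -> matT Fm *m diag_mx (vec A) = 0.
Proof.
move=> H; apply/row_matrixP => i; rewrite row_mul rowT vec_diag row0.
by move/disjoint_setI0: (H _ (enum_valP i)) => ->; rewrite vec0.
Qed.

Lemma rank_union (T : finType) (F0 F1 : {set {set T}}) (A0 A1 : {set T}) :
  (forall S, S \in F0 -> S \subset A0) ->
  (forall S, S \in F1 -> S \subset A1) -> [disjoint A0 & A1] ->
  \rank (matT (F0 :|: F1)) = (\rank (matT F0) + \rank (matT F1))%N.
Proof.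
move=> H0 H1 dA.
have E : (matT (F0 :|: F1) == matT F0 + matT F1)%MS.
  apply/andP; split.
    apply: matT_sub => S; rewrite inE => /orP [] HS.
      by apply: submx_trans (addsmxSl _ _); apply: vec_sub.
    by apply: submx_trans (addsmxSr _ _); apply: vec_sub.
  rewrite addsmx_sub; apply/andP; split; apply: matT_sub => S HS;
    apply: vec_sub; by rewrite inE HS ?orbT.
rewrite (eqmx_rank E) mxrank_disjoint_sum //.
set C := (matT F0 :&: matT F1)%MS.
have [D0 HD0] := submxP (capmxSl (matT F0) (matT F1)).
have [D1 HD1] := submxP (capmxSr (matT F0) (matT F1)).
have e1 : C *m diag_mx (vec A0) = C by rewrite /C HD0 -mulmxA matT_diag.
have e2 : C *m diag_mx (vec A0) = 0.
  rewrite /C HD1 -mulmxA matT_diag0 ?mulmx0 // => S HS.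
  by apply: disjointWl (H1 _ HS) _; rewrite disjoint_sym.
by rewrite -e1 e2.
Qed.

End Lin.


Section Bridge.
Variables (R : realFieldType) (V : finType).

Lemma min_cuts_sub (w : {set V} -> R) S : S \in min_cuts w -> S \subset edges w.
Proof.
rewrite inE => /existsP [X /and3P [_ /eqP -> _]].
by apply/subsetP => e; rewrite inE => /andP [].
Qed.

Definition Pe (w : {set V} -> R) : 'M[R]_(#|{set V}|, #|edges w|) :=
  \matrix_(t, j) ((enum_val t == enum_val j)%:R).

Lemma cdim_matT (w : {set V} -> R) : cdim w = \rank (matT R (min_cuts w)).
Proof.
have E1 : cut_matrix w = matT R (min_cuts w) *m Pe w.
  apply/matrixP => i j; rewrite !mxE.
  under eq_bigr do rewrite !mxE.
  rewrite (sumT (fun x => (x \in enum_val i)%:R * (x == enum_val j)%:R)) sum_ind.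
  by case: (_ \in _).
have E2 : matT R (min_cuts w) = cut_matrix w *m (Pe w)^T.
  apply/matrixP => i t; rewrite !mxE.
  under eq_bigr do rewrite !mxE.
  rewrite -(big_enum_val (A := pred_of_set (edges w))
     (fun x => (if x \in enum_val i then 1 else 0) * (enum_val t == x)%:R)) /=.
  rewrite big_mkcond /=.
  rewrite (eq_bigr (fun x => (x \in enum_val i)%:R * (x == enum_val t)%:R)).
    by rewrite sum_ind.
  move=> x _; rewrite eq_sym.
  case: (boolP (x \in enum_val i)) => Hx.
    by rewrite (subsetP (min_cuts_sub (enum_valP i)) _ Hx).
  by case: (_ \in _); rewrite mul0r.
apply/eqP; rewrite /cdim eqn_leq {1}E1 mxrankM_maxl /= {1}E2 mxrankM_maxl //.
Qed.

End Bridge.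


Section Gen.
Variables (R : realFieldType) (V : finType) (w : {set V} -> R).

Lemma cw_ge0 X : 0 <= cut_weight w X.
Proof.
apply: sumr_ge0 => e; rewrite inE => /andP [].
by rewrite inE => /andP [_ /ltW].
Qed.

Lemma Delta_triv X : ~~ proper_nonempty X -> Delta w X = set0.
Proof.
rewrite /proper_nonempty negb_and !negbK => /orP [] /eqP ->;
  apply/setP => e; rewrite !inE.
  by rewrite setI0 cards0 andbF.
rewrite setIT; apply/negP => /andP [/andP [/eqP -> _]] //.
Qed.

Lemma cw0_Delta X : cut_weight w X = 0 -> Delta w X = set0.
Proof.
move=> H; apply/setP => e; rewrite [RHS]inE; apply/negP => He.
have Hpos : forall e', e' \in Delta w X -> 0 <= w e'.
  by move=> e'; rewrite inE => /andP []; rewrite inE => /andP [_ /ltW].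
have Hz := psumr_eq0P Hpos H He.
have : e \in edges w by move: He; rewrite inE => /andP [].
by rewrite inE Hz ltxx andbF.
Qed.

Lemma mk_min X : proper_nonempty X ->
  (forall Y, proper_nonempty Y -> cut_weight w X <= cut_weight w Y) ->
  Delta w X \in min_cuts w.
Proof.
move=> HX HY; rewrite inE; apply/existsP; exists X; rewrite HX eqxx /=.
by apply/forallP => Y; apply/implyP; apply: HY.
Qed.

Lemma get_min S : S \in min_cuts w -> exists X, [/\ proper_nonempty X, S = Delta w X &
  forall Y, proper_nonempty Y -> cut_weight w X <= cut_weight w Y].
Proof.
rewrite inE => /existsP [X /and3P [HX /eqP HS /forallP HY]].
by exists X; split => // Y HpY; have := HY Y; rewrite HpY.
Qed.

End Gen.

Section DUsec.
Variables (R : realFieldType) (V0 V1 : finType) (v0 : V0) (v1 : V1).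
Variables (w0 : {set V0} -> R) (w1 : {set V1} -> R).

Local Notation D := (DU v0 v1).
Local Notation G := (dunion (v0:=v0) (v1:=v1) w0 w1).

Definition lift0 (y : V0) : D :=
  if (insub y : option {x : V0 | x != v0}) is Some y' then Some (inl y') else None.
Definition lift1 (y : V1) : D :=
  if (insub y : option {x : V1 | x != v1}) is Some y' then Some (inr y') else None.

Lemma lift0_v0 : lift0 v0 = None.
Proof. by rewrite /lift0 insubF // eqxx. Qed.
Lemma lift1_v1 : lift1 v1 = None.
Proof. by rewrite /lift1 insubF // eqxx. Qed.

Lemma to0_lift0 y : to0 (lift0 y) = Some y.
Proof.
rewrite /lift0; case: insubP => [y' _ <-|] //=.
by rewrite negbK => /eqP ->.
Qed.
Lemma to1_lift1 y : to1 (lift1 y) = Some y.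
Proof.
rewrite /lift1; case: insubP => [y' _ <-|] //=.
by rewrite negbK => /eqP ->.
Qed.

Lemma to1_lift0 y : to1 (lift0 y) = if y == v0 then Some v1 else None.
Proof.
rewrite /lift0; case: insubP => [y' Hy _|] /=.
  by rewrite (negPf Hy).
by rewrite negbK => ->.
Qed.
Lemma to0_lift1 y : to0 (lift1 y) = if y == v1 then Some v0 else None.
Proof.
rewrite /lift1; case: insubP => [y' Hy _|] /=.
  by rewrite (negPf Hy).
by rewrite negbK => ->.
Qed.

Lemma lift0_inj : injective lift0.
Proof. by move=> y1 y2 H; have := congr1 (@to0 _ _ v0 v1) H; rewrite !to0_lift0 => [[]]. Qed.
Lemma lift1_inj : injective lift1.
Proof. by move=> y1 y2 H; have := congr1 (@to1 _ _ v0 v1) H; rewrite !to1_lift1 => [[]]. Qed.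

Lemma to0_eq (x : D) y : to0 x = Some y -> x = lift0 y.
Proof.
case: x => [[z|z]|] //= [<-].
  by rewrite /lift0 valK.
by rewrite lift0_v0.
Qed.
Lemma to1_eq (x : D) y : to1 x = Some y -> x = lift1 y.
Proof.
case: x => [[z|z]|] //= [<-].
  by rewrite /lift1 valK.
by rewrite lift1_v1.
Qed.

Lemma D_cases (x : D) : (exists y, x = lift0 y) \/ (exists y, x = lift1 y).
Proof.
case: x => [[z|z]|].
- by left; exists (val z); rewrite /lift0 valK.
- by right; exists (val z); rewrite /lift1 valK.
- by left; exists v0; rewrite lift0_v0.
Qed.

Definition im0 (e : {set V0}) : {set D} := [set lift0 x | x in e].
Definition im1 (e : {set V1}) : {set D} := [set lift1 x | x in e].

Lemma im0_inj : injective im0.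
Proof. exact: imset_inj lift0_inj. Qed.
Lemma im1_inj : injective im1.
Proof. exact: imset_inj lift1_inj. Qed.

Lemma card_im0 e : #|im0 e| = #|e|.
Proof. exact: card_imset lift0_inj. Qed.
Lemma card_im1 e : #|im1 e| = #|e|.
Proof. exact: card_imset lift1_inj. Qed.

Lemma im0_dom e : im0 e \subset [pred x | to0 x].
Proof. by apply/subsetP => x /imsetP [y _ ->]; rewrite inE to0_lift0. Qed.
Lemma im1_dom e : im1 e \subset [pred x | to1 x].
Proof. by apply/subsetP => x /imsetP [y _ ->]; rewrite inE to1_lift1. Qed.

Lemma dom01 (e : {set D}) :
  e \subset [pred x | to0 x] -> e \subset [pred x | to1 x] -> (#|e| <= 1)%N.
Proof.
move=> H0 H1; rewrite -(cards1 (None : D)); apply: subset_leq_card.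
apply/subsetP => x Hx; rewrite inE.
move: (subsetP H0 x Hx) (subsetP H1 x Hx); rewrite !inE.
by case: x {Hx} => [[z|z]|].
Qed.

Lemma im0_back (e : {set D}) : e \subset [pred x | to0 x] ->
  im0 [set odflt v0 (to0 x) | x in e] = e.
Proof.
move=> H; rewrite /im0 -imset_comp -[RHS]imset_id; apply: eq_in_imset => x Hx /=.
move: (subsetP H x Hx); rewrite inE.
by case E: (to0 x) => [y|] //= _; rewrite -(to0_eq E).
Qed.
Lemma im1_back (e : {set D}) : e \subset [pred x | to1 x] ->
  im1 [set odflt v1 (to1 x) | x in e] = e.
Proof.
move=> H; rewrite /im1 -imset_comp -[RHS]imset_id; apply: eq_in_imset => x Hx /=.
move: (subsetP H x Hx); rewrite inE.
by case E: (to1 x) => [y|] //= _; rewrite -(to1_eq E).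
Qed.

Lemma im0_fwd e : [set odflt v0 (to0 x) | x in im0 e] = e.
Proof.
rewrite /im0 -imset_comp -[RHS]imset_id; apply: eq_imset => x /=.
by rewrite to0_lift0.
Qed.
Lemma im1_fwd e : [set odflt v1 (to1 x) | x in im1 e] = e.
Proof.
rewrite /im1 -imset_comp -[RHS]imset_id; apply: eq_imset => x /=.
by rewrite to1_lift1.
Qed.

Lemma G_im0 (e : {set V0}) : G (im0 e) = w0 e.
Proof. by rewrite /dunion im0_dom im0_fwd. Qed.
Lemma G_im1 (e : {set V1}) : (1 < #|e|)%N -> G (im1 e) = w1 e.
Proof.
move=> He; rewrite /dunion im1_dom im1_fwd.
case: ifP => // H0; have := dom01 H0 (im1_dom e).
by rewrite card_im1 leqNgt He.
Qed.


Definition pre0 (X : {set D}) : {set V0} := lift0 @^-1: X.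
Definition pre1 (X : {set D}) : {set V1} := lift1 @^-1: X.

Lemma edgesG : edges G = [set im0 e | e in edges w0] :|: [set im1 e | e in edges w1].
Proof.
apply/setP => e; apply/idP/idP.
  rewrite inE => /andP [/eqP He2]; rewrite /dunion.
  case: ifP => H0.
    rewrite -(im0_back H0) im0_fwd => Hp.
    rewrite inE; apply/orP; left; apply: imset_f.
    by rewrite inE Hp andbT -card_im0 im0_back // He2.
  case: ifP => H1; last by rewrite ltxx.
  rewrite -(im1_back H1) im1_fwd => Hp.
  rewrite inE; apply/orP; right; apply: imset_f.
  by rewrite inE Hp andbT -card_im1 im1_back // He2.
rewrite inE => /orP [] /imsetP [e' He' ->]; move: He'; rewrite !inE => /andP [/eqP He2 Hp].
  by rewrite card_im0 He2 G_im0.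
by rewrite card_im1 He2 G_im1 ?He2.
Qed.

Lemma cardI0 (e : {set V0}) X : #|im0 e :&: X| = #|e :&: pre0 X|.
Proof.
rewrite -card_im0; apply: eq_card => x; rewrite inE.
apply/andP/imsetP => [[/imsetP [y Hy ->] HX]|[y]].
  by exists y => //; rewrite !inE Hy.
by rewrite !inE => /andP [Hy HX] ->; split => //; apply: imset_f.
Qed.
Lemma cardI1 (e : {set V1}) X : #|im1 e :&: X| = #|e :&: pre1 X|.
Proof.
rewrite -card_im1; apply: eq_card => x; rewrite inE.
apply/andP/imsetP => [[/imsetP [y Hy ->] HX]|[y]].
  by exists y => //; rewrite !inE Hy.
by rewrite !inE => /andP [Hy HX] ->; split => //; apply: imset_f.
Qed.

Lemma DeltaG X : Delta G X =
  [set im0 e | e in Delta w0 (pre0 X)] :|: [set im1 e | e in Delta w1 (pre1 X)].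
Proof.
apply/setP => e; apply/idP/idP.
  rewrite inE edgesG inE => /andP [/orP [] /imsetP [e' He' ->] Hc]; rewrite inE.
    by apply/orP; left; apply: imset_f; rewrite inE He' -cardI0 Hc.
  by apply/orP; right; apply: imset_f; rewrite inE He' -cardI1 Hc.
rewrite inE => /orP [] /imsetP [e' He' ->]; move: He'; rewrite inE => /andP [He' Hc];
  rewrite inE edgesG inE.
  by rewrite imset_f // cardI0 Hc.
by rewrite imset_f ?orbT // cardI1 Hc.
Qed.

Lemma cwG X : cut_weight G X = cut_weight w0 (pre0 X) + cut_weight w1 (pre1 X).
Proof.
rewrite /cut_weight DeltaG.
rewrite (eq_bigl [predU [set im0 e | e in Delta w0 (pre0 X)] &
                          [set im1 e | e in Delta w1 (pre1 X)]]); last first.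
  by move=> e; rewrite !inE.
rewrite bigU; last first.
  rewrite -setI_eq0; apply/eqP/setP => e; rewrite inE [RHS]inE.
  apply/negP => /andP [/imsetP [e0 He0 ->] /imsetP [e1 He1 E]].
  have := dom01 (im0_dom e0); rewrite E => /(_ (im1_dom e1)).
  move: He1; rewrite !inE => /andP [/andP [/eqP He _] _].
  by rewrite card_im1 He.
rewrite !big_imset /=.
congr (_ + _); first by apply: eq_bigr => e _; rewrite G_im0.
apply: eq_bigr => e; rewrite !inE => /andP [/andP [/eqP He _] _].
  by rewrite G_im1 ?He.
  by move=> ? ? _ _; apply: im1_inj.
by move=> ? ? _ _; apply: im0_inj.
Qed.

Lemma mem_pre0 X y : (y \in pre0 X) = (lift0 y \in X).
Proof. by rewrite inE. Qed.
Lemma mem_pre1 X y : (y \in pre1 X) = (lift1 y \in X).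
Proof. by rewrite inE. Qed.

Lemma triv_both X : ~~ proper_nonempty (pre0 X) -> ~~ proper_nonempty (pre1 X) ->
  ~~ proper_nonempty X.
Proof.
rewrite /proper_nonempty !negb_and !negbK => /orP [] /eqP H0 /orP [] /eqP H1.
- apply/orP; left; apply/eqP/setP => x; rewrite inE.
  case: (D_cases x) => [[y ->]|[y ->]]; by rewrite -?mem_pre0 -?mem_pre1 ?H0 ?H1 inE.
- by have := mem_pre0 X v0; have := mem_pre1 X v1; rewrite H0 H1 lift0_v0 lift1_v1 !inE => <-.
- by have := mem_pre0 X v0; have := mem_pre1 X v1; rewrite H0 H1 lift0_v0 lift1_v1 !inE => <-.
- apply/orP; right; apply/eqP/setP => x; rewrite inE.
  case: (D_cases x) => [[y ->]|[y ->]]; by rewrite -?mem_pre0 -?mem_pre1 ?H0 ?H1 inE.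
Qed.

Lemma proper_pre0 X : proper_nonempty (pre0 X) -> proper_nonempty X.
Proof.
apply: contraLR; rewrite /proper_nonempty !negb_and !negbK => /orP [] /eqP ->.
  by apply/orP; left; apply/eqP/setP => y; rewrite !inE.
by apply/orP; right; apply/eqP/setP => y; rewrite !inE.
Qed.
Lemma proper_pre1 X : proper_nonempty (pre1 X) -> proper_nonempty X.
Proof.
apply: contraLR; rewrite /proper_nonempty !negb_and !negbK => /orP [] /eqP ->.
  by apply/orP; left; apply/eqP/setP => y; rewrite !inE.
by apply/orP; right; apply/eqP/setP => y; rewrite !inE.
Qed.

Lemma const_triv (T : finType) (b : bool) : ~~ proper_nonempty [set _ : T | b].
Proof.
rewrite /proper_nonempty negb_and !negbK; case: b.
  by apply/orP; right; apply/eqP/setP => y; rewrite !inE.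
by apply/orP; left; apply/eqP/setP => y; rewrite !inE.
Qed.

Definition liftX0 (Y : {set V0}) : {set D} := [set x | odflt v0 (to0 x) \in Y].
Definition liftX1 (Y : {set V1}) : {set D} := [set x | odflt v1 (to1 x) \in Y].

Lemma pre0_liftX0 Y : pre0 (liftX0 Y) = Y.
Proof. by apply/setP => y; rewrite !inE to0_lift0. Qed.
Lemma pre1_liftX1 Y : pre1 (liftX1 Y) = Y.
Proof. by apply/setP => y; rewrite !inE to1_lift1. Qed.

Lemma pre1_liftX0 Y : pre1 (liftX0 Y) = [set _ : V1 | v0 \in Y].
Proof. by apply/setP => y; rewrite !inE to0_lift1; case: (y == v1). Qed.
Lemma pre0_liftX1 Y : pre0 (liftX1 Y) = [set _ : V0 | v1 \in Y].
Proof. by apply/setP => y; rewrite !inE to1_lift0; case: (y == v0). Qed.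

Lemma Delta_liftX0 Y : Delta G (liftX0 Y) = [set im0 e | e in Delta w0 Y].
Proof.
rewrite DeltaG pre0_liftX0 pre1_liftX0 (Delta_triv _ (const_triv _ _)).
by rewrite imset0 setU0.
Qed.
Lemma Delta_liftX1 Y : Delta G (liftX1 Y) = [set im1 e | e in Delta w1 Y].
Proof.
rewrite DeltaG pre1_liftX1 pre0_liftX1 (Delta_triv _ (const_triv _ _)).
by rewrite imset0 set0U.
Qed.

Lemma cw_liftX0 Y : cut_weight G (liftX0 Y) = cut_weight w0 Y.
Proof.
by rewrite cwG pre0_liftX0 pre1_liftX0 /cut_weight (Delta_triv _ (const_triv _ _)) big_set0 addr0.
Qed.
Lemma cw_liftX1 Y : cut_weight G (liftX1 Y) = cut_weight w1 Y.
Proof.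
by rewrite cwG pre1_liftX1 pre0_liftX1 /cut_weight (Delta_triv _ (const_triv _ _)) big_set0 add0r.
Qed.

Definition I0 (S : {set {set V0}}) : {set {set D}} := [set im0 e | e in S].
Definition I1 (S : {set {set V1}}) : {set {set D}} := [set im1 e | e in S].

Variables (c0 c1 : R) (hc0 : is_min_cut_weight w0 c0) (hc1 : is_min_cut_weight w1 c1).

Lemma minG_le0 X : (forall Y, proper_nonempty Y -> cut_weight G X <= cut_weight G Y) ->
  cut_weight G X <= c0.
Proof.
move=> H; case: hc0 => [[Z [HZ <-]] _].
rewrite -cw_liftX0; apply: H; apply: proper_pre0; by rewrite pre0_liftX0.
Qed.
Lemma minG_le1 X : (forall Y, proper_nonempty Y -> cut_weight G X <= cut_weight G Y) ->
  cut_weight G X <= c1.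
Proof.
move=> H; case: hc1 => [[Z [HZ <-]] _].
rewrite -cw_liftX1; apply: H; apply: proper_pre1; by rewrite pre1_liftX1.
Qed.

Lemma cw_lower Y : proper_nonempty Y -> c0 <= cut_weight G Y \/ c1 <= cut_weight G Y.
Proof.
move=> HY; rewrite cwG.
have n0 := cw_ge0 w0 (pre0 Y); have n1 := cw_ge0 w1 (pre1 Y).
case: (boolP (proper_nonempty (pre0 Y))) => H0.
  left; have := hc0.2 _ H0; lra.
case: (boolP (proper_nonempty (pre1 Y))) => H1.
  right; have := hc1.2 _ H1; lra.
by move: (triv_both H0 H1); rewrite HY.
Qed.

Lemma branch0 X : proper_nonempty X ->
  (forall Y, proper_nonempty Y -> cut_weight G X <= cut_weight G Y) ->
  proper_nonempty (pre0 X) ->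
  c0 <= c1 /\ Delta G X \in [set I0 S | S in min_cuts w0].
Proof.
move=> HX Hm HP0.
have h0 := minG_le0 Hm; have h1 := minG_le1 Hm; rewrite cwG in h0 h1.
have l0 := hc0.2 _ HP0.
have n0 := cw_ge0 w0 (pre0 X); have n1 := cw_ge0 w1 (pre1 X).
have D1 : Delta w1 (pre1 X) = set0.
  case: (boolP (proper_nonempty (pre1 X))) => HP1; last exact: Delta_triv.
  by apply: cw0_Delta; lra.
split; first lra.
rewrite DeltaG D1 imset0 setU0.
apply: (imset_f (fun S => I0 S)); apply: mk_min => // Y HY.
have := hc0.2 _ HY; lra.
Qed.

Lemma branch1 X : proper_nonempty X ->
  (forall Y, proper_nonempty Y -> cut_weight G X <= cut_weight G Y) ->
  proper_nonempty (pre1 X) ->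
  c1 <= c0 /\ Delta G X \in [set I1 S | S in min_cuts w1].
Proof.
move=> HX Hm HP1.
have h0 := minG_le0 Hm; have h1 := minG_le1 Hm; rewrite cwG in h0 h1.
have l1 := hc1.2 _ HP1.
have n0 := cw_ge0 w0 (pre0 X); have n1 := cw_ge0 w1 (pre1 X).
have D0 : Delta w0 (pre0 X) = set0.
  case: (boolP (proper_nonempty (pre0 X))) => HP0; last exact: Delta_triv.
  by apply: cw0_Delta; lra.
split; first lra.
rewrite DeltaG D0 imset0 set0U.
apply: (imset_f (fun S => I1 S)); apply: mk_min => // Y HY.
have := hc1.2 _ HY; lra.
Qed.

Lemma sup0 S : S \in min_cuts w0 -> c0 <= c1 -> I0 S \in min_cuts G.
Proof.
move=> /get_min [X [HX -> Hm]] hle.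
have hX : cut_weight w0 X <= c0.
  by case: hc0 => [[Z [HZ <-]] _]; apply: Hm.
rewrite /I0 -Delta_liftX0; apply: mk_min.
  by apply: proper_pre0; rewrite pre0_liftX0.
move=> Y HY; rewrite cw_liftX0; case: (cw_lower HY); lra.
Qed.

Lemma sup1 S : S \in min_cuts w1 -> c1 <= c0 -> I1 S \in min_cuts G.
Proof.
move=> /get_min [X [HX -> Hm]] hle.
have hX : cut_weight w1 X <= c1.
  by case: hc1 => [[Z [HZ <-]] _]; apply: Hm.
rewrite /I1 -Delta_liftX1; apply: mk_min.
  by apply: proper_pre1; rewrite pre1_liftX1.
move=> Y HY; rewrite cw_liftX1; case: (cw_lower HY); lra.
Qed.

Lemma minG_cases S : S \in min_cuts G ->
  (c0 <= c1 /\ S \in [set I0 S | S in min_cuts w0]) \/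
  (c1 <= c0 /\ S \in [set I1 S | S in min_cuts w1]).
Proof.
move=> /get_min [X [HX -> Hm]].
case: (boolP (proper_nonempty (pre0 X))) => H0; first by left; apply: branch0.
case: (boolP (proper_nonempty (pre1 X))) => H1; first by right; apply: branch1.
by move: (triv_both H0 H1); rewrite HX.
Qed.

End DUsec.


Section Final.
Variables (R : realFieldType) (V0 V1 : finType) (v0 : V0) (v1 : V1).
Variables (w0 : {set V0} -> R) (w1 : {set V1} -> R).
Variables (c0 c1 : R) (hc0 : is_min_cut_weight w0 c0) (hc1 : is_min_cut_weight w1 c1).

Local Notation D := (DU v0 v1).
Local Notation G := (dunion (v0:=v0) (v1:=v1) w0 w1).

Lemma rank_I0 : \rank (matT R [set I0 v0 v1 S | S in min_cuts w0]) = cdim w0.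
Proof. by rewrite cdim_matT -(rank_relabel _ _ (@im0_inj V0 V1 v0 v1)). Qed.
Lemma rank_I1 : \rank (matT R [set I1 v0 v1 S | S in min_cuts w1]) = cdim w1.
Proof. by rewrite cdim_matT -(rank_relabel _ _ (@im1_inj V0 V1 v0 v1)). Qed.

Lemma case_lt : c0 < c1 -> cdim G = cdim w0.
Proof.
move=> hlt; rewrite cdim_matT -rank_I0; congr (\rank (matT R _)).
apply/setP => S; apply/idP/idP.
  case/(minG_cases hc0 hc1) => [[_ //]|[h _]]; lra.
by case/imsetP => S' HS' ->; apply: (sup0 v0 v1 hc0 hc1) => //; apply: ltW.
Qed.

Lemma case_gt : c1 < c0 -> cdim G = cdim w1.
Proof.
move=> hlt; rewrite cdim_matT -rank_I1; congr (\rank (matT R _)).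
apply/setP => S; apply/idP/idP.
  case/(minG_cases hc0 hc1) => [[h _]|[_ //]]; lra.
by case/imsetP => S' HS' ->; apply: (sup1 v0 v1 hc0 hc1) => //; apply: ltW.
Qed.

Lemma case_eq : c0 = c1 -> cdim G = (cdim w0 + cdim w1)%N.
Proof.
move=> heq; rewrite cdim_matT -rank_I0 -rank_I1.
have -> : min_cuts G = [set I0 v0 v1 S | S in min_cuts w0] :|: [set I1 v0 v1 S | S in min_cuts w1].
  apply/setP => S; rewrite in_setU; apply/idP/idP.
    by case/(minG_cases hc0 hc1) => [[_ ->]|[_ ->]]; rewrite ?orbT.
  case/orP => /imsetP [S' HS' ->].
    by apply: (sup0 v0 v1 hc0 hc1) => //; rewrite heq.
  by apply: (sup1 v0 v1 hc0 hc1) => //; rewrite heq.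
apply: (@rank_union _ _ _ _ ( [set e : {set D} | (e \subset [pred x | to0 x]) && (1 < #|e|)%N])
                   ([set e : {set D} | (e \subset [pred x | to1 x]) && (1 < #|e|)%N])).
- move=> S /imsetP [S' HS' ->]; apply/subsetP => e /imsetP [e' He' ->].
  have := subsetP (min_cuts_sub HS') _ He'; rewrite !inE => /andP [/eqP H2 _].
  by rewrite im0_dom card_im0 H2.
- move=> S /imsetP [S' HS' ->]; apply/subsetP => e /imsetP [e' He' ->].
  have := subsetP (min_cuts_sub HS') _ He'; rewrite !inE => /andP [/eqP H2 _].
  by rewrite im1_dom card_im1 H2.
- rewrite -setI_eq0; apply/eqP/setP => e; rewrite inE [RHS]inE !inE.
  apply/negP => /andP [/andP [H0 Hc] /andP [H1 _]].
  by have := dom01 H0 H1; rewrite leqNgt Hc.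
Qed.

End Final.

Theorem mainTheorem19 (R : realFieldType) (V0 V1 : finType)
    (w0 : {set V0} -> R) (w1 : {set V1} -> R) (v0 : V0) (v1 : V1)
    (hw0 : nonneg_weights w0) (hw1 : nonneg_weights w1)
    (c0 c1 : R) (hc0 : is_min_cut_weight w0 c0) (hc1 : is_min_cut_weight w1 c1) :
  [/\ c0 = c1 -> cdim (dunion (v0:=v0) (v1:=v1) w0 w1) = (cdim w0 + cdim w1)%N,
      c0 < c1 -> cdim (dunion (v0:=v0) (v1:=v1) w0 w1) = cdim w0
    & c1 < c0 -> cdim (dunion (v0:=v0) (v1:=v1) w0 w1) = cdim w1].
Proof.
split; [exact: case_eq hc0 hc1|exact: case_lt hc0 hc1|exact: case_gt hc0 hc1].
Qed.
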